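(* Let $S$ be a positive integer and let $v\in\mathbb{R}^n$ be a vector with at least $S$ magnitudes. Let $p=(p_1,\dots,p_n)\in[1/3,2/3]^n$ and let $w=(w_1,\dots,w_n)\in\{\pm1\}^n$ be a random vector with independent entries, where $\Pr[w_i=1]=p_i$ and $\Pr[w_i=-1]=1-p_i$ for each $i\in[n]$. Then for every $\alpha\in\mathbb{R}$, \[\Pr\big[\langle v,w\rangle=\alpha\big]\le\left(\tfrac{2}{3}\right)^{\lceil S/2\rceil}.\]
   Context: A non-zero real number $x$ has magnitude $j\in\mathbb{Z}$ if $10^j\le|x|<10^{j+1}$. A vector $v$ has at least $S$ magnitudes if there exist $S$ non-zero entries of $v$ with pairwise distinct magnitudes. *)

(* Defs.v *)
From HB Require Import structures.
From mathcomp Require Import all_boot all_order all_algebra.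
From mathcomp Require Import all_reals.
Set Implicit Arguments. Unset Strict Implicit. Unset Printing Implicit Defensive.
Import Order.TTheory GRing.Theory Num.Theory.
Local Open Scope ring_scope.

Definition has_magnitude (R : realFieldType) (x : R) (j : int) : Prop :=
  x != 0 /\ (10%:R ^ j <= `|x|) /\ (`|x| < 10%:R ^ (j + 1)).

Definition at_least_magnitudes (R : realFieldType) (n : nat) (v : 'rV[R]_n)
  (S : nat) : Prop :=
  exists (I : {set 'I_n}) (mag : 'I_n -> int),
    #|I| = S /\
    (forall i, i \in I -> has_magnitude (v 0 i) (mag i)) /\
    {in I &, injective mag}.

Definition sgn_of (R : ringType) (b : bool) : R := if b then 1 else -1.

Definition prob_w (R : ringType) (n : nat) (p : 'rV[R]_n)
  (w : {ffun 'I_n -> bool}) : R :=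
  \prod_(i < n) (if w i then p 0 i else 1 - p 0 i).

Definition prob_inner_eq (R : realFieldType) (n : nat) (p v : 'rV[R]_n)
  (alpha : R) : R :=
  \sum_(w : {ffun 'I_n -> bool} | \sum_(i < n) v 0 i * sgn_of R (w i) == alpha)
     prob_w p w.

(* Main.v *)
Require Import Defs.
From HB Require Import structures.
From mathcomp Require Import all_boot all_order all_algebra.
From mathcomp Require Import all_reals.
From mathcomp Require Import ring lra zify.
Import Order.TTheory GRing.Theory Num.Theory.
Local Open Scope ring_scope.

Definition sparse (n : nat) (mag : 'I_n -> int) (T : {set 'I_n}) :=
  forall a b, a \in T -> b \in T -> mag a <= mag b -> a != b -> mag a + 2 <= mag b.

Arguments sparse {n}.

Lemma exists_max {n : nat} (mag : 'I_n -> int) (U : {set 'I_n}) (i0 : 'I_n) :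
  i0 \in U -> exists2 i, i \in U & forall j, j \in U -> mag j <= mag i.
Proof.
move=> i0U; case: (@arg_maxP _ _ _ i0 (mem U) mag i0U) => i iU hi.
by exists i => // j jU; apply: hi.
Qed.

Lemma sum_bound (R : realType) (n : nat) (v : 'rV[R]_n) (mag : 'I_n -> int)
  (T : {set 'I_n}) :
  (forall i, i \in T -> has_magnitude (v 0 i) (mag i)) -> sparse mag T ->
  forall k (U : {set 'I_n}), (#|U| <= k)%N -> U \subset T ->
  forall M, (forall j, j \in U -> mag j <= M) ->
  \sum_(j in U) `|v 0 j| < 2 * (10%:R : R) ^ (M + 1).
Proof.
move=> hm hs; elim=> [|k IH] U hU hUT M hM.
  have -> : U = set0 by apply/eqP; rewrite -cards_eq0 -leqn0.
  by rewrite big_set0 mulr_gt0 // exprz_gt0.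
case: (set_0Vmem U) => [->|[i0 i0U]].
  by rewrite big_set0 mulr_gt0 // exprz_gt0.
have [i iU himax] := exists_max mag U i0 i0U.
rewrite (big_setD1 _ iU) /=.
have iT : i \in T by apply: (subsetP hUT).
have hU' : (#|U :\ i| <= k)%N by move: hU; rewrite (cardsD1 i U) iU.
have hUT' : U :\ i \subset T by apply: subset_trans hUT; apply: subsetDl.
have hM' : forall j, j \in U :\ i -> mag j <= mag i - 2.
  move=> j; rewrite !inE => /andP[ji jU].
  have := hs j i (subsetP hUT j jU) iT (himax j jU) ji; lia.
have IH' := IH _ hU' hUT' _ hM'.
have [_ [_ hvi]] := hm i iT.
set X := (10%:R : R) ^ (mag i - 2 + 1).
have X0 : 0 < X by rewrite exprz_gt0.
have e1 : (10%:R : R) ^ (mag i + 1) = X * (10%:R ^+ 2).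
  have -> : mag i + 1 = (mag i - 2 + 1) + 2%:Z by lia.
  by rewrite expfzDr ?pnatr_eq0.
have e2 : (10%:R : R) ^ (mag i + 1) <= (10%:R : R) ^ (M + 1).
  apply: ler_weXz2l; first by rewrite ler1n.
  by have := hM i iU; lia.
rewrite -/X in IH'.
move: e1; rewrite expr2 -natrM /= => e1.
lra.
Qed.

Lemma dissoc (R : realType) (n : nat) (v : 'rV[R]_n) (mag : 'I_n -> int)
  (T : {set 'I_n}) :
  (forall i, i \in T -> has_magnitude (v 0 i) (mag i)) -> sparse mag T ->
  forall w w' : {ffun 'I_n -> bool}, (forall i, i \notin T -> w i = w' i) ->
  \sum_(i < n) v 0 i * sgn_of R (w i) = \sum_(i < n) v 0 i * sgn_of R (w' i) ->
  w = w'.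
Proof.
move=> hm hs w w' hout heq.
pose D := [set i | w i != w' i].
case: (set_0Vmem D) => [D0|[i0 i0D]].
  apply/ffunP => i; apply/eqP; apply: contraT => hi.
  have : i \in D by rewrite inE.
  by rewrite D0 inE.
have DT : D \subset T.
  apply/subsetP => j; rewrite inE; apply: contraR => jT; by rewrite hout // eqxx.
have [i iD himax] := exists_max mag D i0 i0D.
pose d := fun j => sgn_of R (w j) - sgn_of R (w' j).
have : \sum_(j < n) v 0 j * d j = 0.
  rewrite /d; under eq_bigr => k _ do rewrite mulrBr.
  by rewrite sumrB heq subrr.
rewrite (bigID (mem D)) /= [X in _ + X]big1; last first.
  by move=> j; rewrite inE negbK /d => /eqP ->; rewrite subrr mulr0.
rewrite addr0.
have -> : \sum_(j < n | j \in D) v 0 j * d j = \sum_(j in D) v 0 j * d j by [].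
rewrite (big_setD1 _ iD) /= => hsum.
have iT : i \in T by apply: (subsetP DT).
have hD' : forall j, j \in D :\ i -> mag j <= mag i - 2.
  move=> j; rewrite in_setD1 => /andP[ji jD].
  have := hs j i (subsetP DT j jD) iT (himax j jD) ji; lia.
have SB := @sum_bound R n v mag T hm hs _ (D :\ i) (leqnn _) (subset_trans (subsetDl D [set i]) DT) _ hD'.
have [_ [hvi _]] := hm i iT.
set X := (10%:R : R) ^ (mag i - 2 + 1) in SB.
have e1 : (10%:R : R) ^ (mag i) = X * 10%:R.
  have -> : mag i = (mag i - 2 + 1) + 1%:Z by lia.
  by rewrite expfzDr ?pnatr_eq0.
have X0 : 0 < X by rewrite exprz_gt0.
have hdi : `|d i| = 2.
  move: iD; rewrite inE /d /sgn_of; case: (w i); case: (w' i) => //= _.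
    by rewrite ger0_norm; lra.
  by rewrite ler0_norm; lra.
have hdj : forall j, `|d j| <= 2.
  move=> j; rewrite /d /sgn_of; case: (w j); case: (w' j) => /=.
  - by rewrite subrr normr0; lra.
  - by rewrite ger0_norm; lra.
  - by rewrite ler0_norm; lra.
  - by rewrite subrr normr0; lra.
have hrest : `|\sum_(j in D :\ i) v 0 j * d j| <= 2 * \sum_(j in D :\ i) `|v 0 j|.
  apply: le_trans (ler_norm_sum _ _ _) _; rewrite mulr_sumr; apply: ler_sum => j _.
  rewrite normrM; have := hdj j; have := normr_ge0 (v 0 j); nra.
have e : v 0 i * d i = - \sum_(j in D :\ i) v 0 j * d j.
  by apply/eqP; rewrite -addr_eq0 hsum.
move: (congr1 Num.norm e); rewrite normrM hdi normrN => e2.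
exfalso; lra.
Qed.

Lemma card_fiber_le1 {n : nat} (mag : 'I_n -> int) (I : {set 'I_n}) (c : int) :
  {in I &, injective mag} -> (#|[set j in I | mag j == c]| <= 1)%N.
Proof.
move=> inj; case: (set_0Vmem [set j in I | mag j == c]) => [->|[j0 hj0]].
  by rewrite cards0.
rewrite -(cards1 j0); apply: subset_leq_card; apply/subsetP => j.
move: hj0; rewrite !inE => /andP[j0I /eqP e0] /andP[jI /eqP e].
by apply/eqP; apply: inj => //; rewrite e e0.
Qed.

Lemma extract {n : nat} (mag : 'I_n -> int) :
  forall k (I : {set 'I_n}), (#|I| <= k)%N -> {in I &, injective mag} ->
  exists T : {set 'I_n}, T \subset I /\ ((#|I|.+1)./2 <= #|T|)%N /\ sparse mag T.
Proof.
elim=> [|k IH] I hI inj.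
  exists set0; split; first exact: sub0set.
  split; first by move: hI; rewrite leqn0 => /eqP ->.
  by move=> a b; rewrite inE.
case: (set_0Vmem I) => [I0|[i0 i0I]].
  exists set0; split; first exact: sub0set.
  split; first by rewrite I0 cards0.
  by move=> a b; rewrite inE.
have [i iI himax] := exists_max mag I i0 i0I.
pose J := [set j in I | mag j + 2 <= mag i].
have JI : J \subset I by apply/subsetP => j; rewrite inE => /andP[].
have iJ : i \notin J by rewrite inE negb_and; apply/orP; right; rewrite -ltNge; lia.
have hJ : (#|J| < #|I|)%N.
  apply: proper_card; rewrite properEneq JI andbT; apply/eqP => e.
  by move: iJ; rewrite e iI.
have hIJ : (#|I| <= #|J| + 2)%N.
  rewrite -(cardsID J I) (setIidPr JI) leq_add2l.
  apply: (@leq_trans #|[set j in I | mag j == mag i] :|: [set j in I | mag j == mag i - 1]|).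
    apply: subset_leq_card; apply/subsetP => j; rewrite !inE => /andP[jJ jI].
    rewrite jI /=; move: jJ; rewrite jI /= -ltNge => hj.
    have := himax j jI; lia.
  rewrite cardsU; apply: leq_trans (leq_subr _ _) _.
  have := card_fiber_le1 mag I (mag i) inj; have := card_fiber_le1 mag I (mag i - 1) inj; lia.
have [T' [T'J [hT' sT']]] := IH J (ltnSE (leq_trans hJ hI)) (sub_in2 (subsetP JI) inj).
exists (i |: T'); split.
  by rewrite subUset sub1set iI (subset_trans T'J JI).
split.
  rewrite cardsU1 (contra (subsetP T'J i) iJ) add1n.
  have : (#|I|.+1 <= (#|J|.+1).+2)%N by lia.
  move/half_leq => /= h; apply: leq_trans h _; rewrite ltnS; move: hT'; by rewrite uphalfE.
move=> a b; rewrite !inE => /orP[/eqP ->|aT] /orP[/eqP ->|bT] hab hne.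
- by rewrite eqxx in hne.
- have := subsetP T'J b bT; rewrite inE => /andP[_]; lia.
- have := subsetP T'J a aT; rewrite inE => /andP[_]; lia.
- exact: sT'.
Qed.
Lemma prob_bound (R : realType) (n : nat) (p v : 'rV[R]_n) (alpha : R) (T : {set 'I_n}) :
  (forall i : 'I_n, 3^-1 <= p 0 i <= 2%:R / 3%:R) ->
  (forall w w' : {ffun 'I_n -> bool}, (forall i, i \notin T -> w i = w' i) ->
     \sum_(i < n) v 0 i * sgn_of R (w i) = alpha ->
     \sum_(i < n) v 0 i * sgn_of R (w' i) = alpha -> w = w') ->
  prob_inner_eq p v alpha <= (2%:R / 3%:R) ^+ #|T|.
Proof.
move=> hp hinj.
pose q := fun i (b : bool) => if b then p 0 i else 1 - p 0 i.
have q0 : forall i b, 0 <= q i b.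
  move=> i b; have /andP[h1 h2] := hp i; rewrite /q; case: b; lra.
have q23 : forall i b, q i b <= 2%:R / 3%:R.
  move=> i b; have /andP[h1 h2] := hp i; rewrite /q; case: b; lra.
pose r := fun i (b : bool) => if i \in T then (if b then 1 else 0) else q i b.
pose pi := fun w : {ffun 'I_n -> bool} => [ffun i => if i \in T then true else w i].
pose h := fun u : {ffun 'I_n -> bool} => \prod_(i < n) r i (u i).
have r0 : forall i b, 0 <= r i b.
  by move=> i b; rewrite /r; case: ifP => _ //; case: b.
have h0 : forall u, 0 <= h u by move=> u; apply: prodr_ge0 => i _.
have hsum : \sum_u h u = 1.
  rewrite /h -(bigA_distr_bigA (fun i b => r i b)).
  apply: big1 => i _; rewrite big_bool /r; case: ifP => _ /=; first by rewrite addr0.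
  rewrite /q /=; ring.
have hw : forall w, prob_w p w <= (2%:R / 3%:R) ^+ #|T| * h (pi w).
  move=> w; rewrite /prob_w /h -prodr_const [X in _ <= X * _]big_mkcond -big_split /=.
  apply: ler_prod => i _; rewrite /r ffunE; case iT: (i \in T).
    by rewrite mulr1 -/(q i (w i)) q0 q23.
  by rewrite mul1r -/(q i (w i)) q0 lexx.
rewrite /prob_inner_eq.
apply: le_trans (ler_sum _ (fun w _ => hw w)) _.
rewrite -mulr_sumr; apply: ler_piMr; first by apply: exprn_ge0; lra.
set P := fun w : {ffun _ -> bool} => \sum_(i < n) v 0 i * sgn_of R (w i) == alpha.
have -> : \sum_(w | P w) h (pi w) = \sum_(w in [set w | P w]) h (pi w).
  by apply: eq_bigl => w; rewrite inE.
rewrite -big_imset; last first.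
  move=> w1 w2; rewrite !inE => /eqP e1 /eqP e2 epi; apply: hinj => // i iT.
  by move/ffunP: epi => /(_ i); rewrite !ffunE (negbTE iT).
rewrite -hsum [X in _ <= X](bigID (mem (pi @: [set w | P w]))) /=.
by rewrite lerDl; apply: sumr_ge0.
Qed.

Theorem mainTheorem3 (R : realType) (n S : nat) (v p : 'rV[R]_n) (alpha : R) :
  (0 < S)%N ->
  at_least_magnitudes v S ->
  (forall i : 'I_n, 3^-1 <= p 0 i <= 2%:R / 3%:R) ->
  prob_inner_eq p v alpha <= (2%:R / 3%:R) ^+ (S.+1)./2.
Proof.
move=> S0 [I [mag [hcard [hm inj]]]] hp.
have [T [TI [hT sT]]] := extract mag #|I| I (leqnn _) inj.
have hmT : forall i, i \in T -> has_magnitude (v 0 i) (mag i).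
  by move=> i iT; apply: hm (subsetP TI i iT).
have hinj : forall w w' : {ffun 'I_n -> bool}, (forall i, i \notin T -> w i = w' i) ->
     \sum_(i < n) v 0 i * sgn_of R (w i) = alpha ->
     \sum_(i < n) v 0 i * sgn_of R (w' i) = alpha -> w = w'.
  move=> w w' hout e1 e2; apply: (@dissoc R n v mag T hmT sT w w' hout).
  by rewrite e1 e2.
apply: le_trans (@prob_bound R n p v alpha T hp hinj) _.
rewrite -hcard; apply: ler_wiXn2l => //; lra.
Qed.
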